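(* Let $\mathbb{F}_q$ be a finite field, $m$ a positive divisor of $q-1$, $n$ a positive integer, and $f(x)=x^nh\big(x^{\frac{q-1}{m}}\big)\in\mathbb{F}_q[x]$ a polynomial with index $m$ which is $m$-nice over $\mathbb{F}_q$. Let $k$ be a positive integer and $b\in\mathbb{F}_q^*$. If $x\in\mathbb{F}_q$ satisfies $f^{(k)}(x)=b$, then $x^{\frac{q-1}{m}}=\psi_f^{(-k)}\big(b^{\frac{q-1}{m}}\big)$.
   Context: $\mu_m$ is the set of $m$-th roots of unity in $\mathbb{F}_q$. Every $f$ with $f(0)=0$ can be written uniquely as $f(x)=x^nh(x^{\frac{q-1}{m}})$ with $h(0)\ne0$ and $m$ minimal; $m$ is the index. $\psi_f(x)=x^nh(x)^{\frac{q-1}{m}}$, and $f^{(k)},\psi_f^{(k)}$ denote iterates. $f$ is $m$-nice if $\psi_f$ restricted to $\mu_m\setminus\psi_f^{-1}(0)$ is an injective map into $\mu_m$. For $y\in\mu_m$, $\psi_f^{(-k)}(y)$ denotes the element $\xi\in\mu_m$ with $\psi_f^{(k)}(\xi)=y$ (unique by $m$-niceness). *)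

(* Defs.v *)
From mathcomp Require Import all_boot all_order all_algebra all_field.
Set Implicit Arguments. Unset Strict Implicit. Unset Printing Implicit Defensive.
Import GRing.Theory.
Local Open Scope ring_scope.

Section Defs.
Variable F : finFieldType.

Definition qm1 : nat := (#|F| - 1)%N.

Definition mu (m : nat) : pred F := fun y => y ^+ m == 1.

Definition has_form (f : {poly F}) (m n : nat) (h : {poly F}) : Prop :=
  [/\ (0 < m)%N, (m %| qm1)%N, h.[0] != 0 &
      f = 'X^n * (h \Po 'X^(qm1 %/ m))].

Definition index_of (f : {poly F}) (m : nat) : Prop :=
  (exists n h, has_form f m n h) /\
  (forall m' n' h', has_form f m' n' h' -> (m <= m')%N).

Definition psi (m n : nat) (h : {poly F}) (x : F) : F :=
  x ^+ n * (h.[x]) ^+ (qm1 %/ m).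

Definition m_nice (m n : nat) (h : {poly F}) : Prop :=
  (forall x, x \in mu m -> psi m n h x != 0 -> psi m n h x \in mu m) /\
  (forall x y, x \in mu m -> y \in mu m -> psi m n h x != 0 -> psi m n h y != 0 ->
     psi m n h x = psi m n h y -> x = y).

(* psi_f^{(-k)}(y): the element xi of mu_m with psi_f^{(k)}(xi) = y
   (chosen by [pick]; 0 if there is none) *)
Definition psi_inv (m n : nat) (h : {poly F}) (k : nat) (y : F) : F :=
  odflt 0 [pick xi | (xi \in mu m) && (iter k (psi m n h) xi == y)].

End Defs.

(* Main.v *)
Require Import Defs.
From mathcomp Require Import all_boot all_order all_algebra all_field.
Import GRing.Theory.
Local Open Scope ring_scope.

Lemma iter_psi0 (F : finFieldType) (m n : nat) (h : {poly F}) k :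
  (0 < n)%N -> iter k (psi m n h) 0 = 0.
Proof.
move=> n0; elim: k => [|k IH] //=; rewrite IH /psi expr0n.
by rewrite eqn0Ngt n0 mul0r.
Qed.

Lemma psi_inj_iter (F : finFieldType) (m n : nat) (h : {poly F}) k :
  (0 < n)%N -> m_nice m n h -> forall xi eta,
  xi \in mu m -> eta \in mu m ->
  iter k (psi m n h) xi = iter k (psi m n h) eta ->
  iter k (psi m n h) xi != 0 -> xi = eta.
Proof.
move=> n0 [cl inj]; elim: k => [|k IH] xi eta Hx He //.
rewrite !iterSr => E nz.
have nzx : psi m n h xi != 0.
  by apply: contraNneq nz => Z; rewrite Z iter_psi0.
have nze : psi m n h eta != 0.
  by apply: contraNneq nz => Z; rewrite E Z iter_psi0.
by apply: inj => //; apply: IH => //; exact: cl.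
Qed.

Theorem lemma3p5 (F : finFieldType) (m n : nat) (h f : {poly F}) (k : nat) (b x : F) :
  (0 < m)%N -> (m %| qm1 F)%N -> (0 < n)%N ->
  has_form f m n h -> index_of f m -> m_nice m n h ->
  (0 < k)%N -> b != 0 ->
  iter k (fun y => f.[y]) x = b ->
  x ^+ (qm1 F %/ m) = psi_inv m n h k (b ^+ (qm1 F %/ m)).
Proof.
move=> m0 dm n0 [_ _ _ ef] _ nice k0 b0 fk.
set d := (qm1 F %/ m)%N.
have fE y : f.[y] ^+ d = psi m n h (y ^+ d).
  rewrite ef hornerM hornerXn horner_comp hornerXn /psi exprMn -!exprM mulnC.
  done.
have iterE j y : (iter j (fun y => f.[y]) y) ^+ d = iter j (psi m n h) (y ^+ d).
  by elim: j => [|j IH] //=; rewrite fE IH.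
have f00 : f.[0] = 0.
  by rewrite ef hornerM hornerXn expr0n eqn0Ngt n0 mul0r.
have x0 : x != 0.
  apply: contraNneq b0 => X0; rewrite -fk X0.
  by apply/eqP; elim: (k) => [|j IH] //=; rewrite IH f00.
have card_pos : (0 < #|F|)%N by apply/card_gt0P; exists 0.
have unit1 (y : F) : y != 0 -> y ^+ qm1 F = 1.
  move=> y0; apply: (@mulfI F y); rewrite // mulr1 -exprS /qm1 subn1 prednK //.
  exact: expf_card.
have xmu : x ^+ d \in mu m.
  by rewrite /mu unfold_in /= -exprM /d divnK // unit1.
have Hk : iter k (psi m n h) (x ^+ d) = b ^+ d by rewrite -iterE fk.
have bd0 : b ^+ d != 0 by rewrite expf_neq0.
rewrite /psi_inv; case: pickP => [xi /andP [ximu /eqP Exi]|none].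
  apply: (@psi_inj_iter F m n h k n0 nice _ _ xmu ximu); first by rewrite Hk Exi.
  by rewrite Hk.
by move: (none (x ^+ d)); rewrite xmu Hk eqxx.
Qed.
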